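(* There is no real number $s$ such that $S(a,b)\le\lambda_s(a,b)$ holds for all $a,b>0$.
   Context: For $a,b>0$ with $a\neq b$ define $$\lambda_s(a,b)=\begin{cases}\dfrac{s-1}{s+1}\cdot\dfrac{a^{s+1}+b^{s+1}-2\left(\frac{a+b}{2}\right)^{s+1}}{a^s+b^s-2\left(\frac{a+b}{2}\right)^s}, & s\in\mathbb{R}\setminus\{-1,0,1\},\\[3mm] \dfrac{2\log\frac{a+b}{2}-\log a-\log b}{\frac{1}{2a}+\frac{1}{2b}-\frac{2}{a+b}}, & s=-1,\\[3mm] \dfrac{a\log a+b\log b-(a+b)\log\frac{a+b}{2}}{2\log\frac{a+b}{2}-\log a-\log b}, & s=0,\\[3mm] \dfrac{(b-a)^2}{4\left(a\log a+b\log b-(a+b)\log\frac{a+b}{2}\right)}, & s=1,\end{cases}$$ and $\lambda_s(a,a)=a$. The Gini mean is $S(a,b)=a^{a/(a+b)}\,b^{b/(a+b)}$. *)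

(* Defs.v *)
From Stdlib Require Import Reals.
Open Scope R_scope.

Definition gini_S (a b : R) : R :=
  Rpower a (a / (a + b)) * Rpower b (b / (a + b)).

Definition lambda_mean (s a b : R) : R :=
  if Req_EM_T a b then a else
  let m := (a + b) / 2 in
  if Req_EM_T s (-1) then
    (2 * ln m - ln a - ln b) / (/ (2 * a) + / (2 * b) - 2 / (a + b))
  else if Req_EM_T s 0 then
    (a * ln a + b * ln b - (a + b) * ln m) / (2 * ln m - ln a - ln b)
  else if Req_EM_T s 1 then
    (b - a) ^ 2 / (4 * (a * ln a + b * ln b - (a + b) * ln m))
  else
    (s - 1) / (s + 1) *
    ((Rpower a (s + 1) + Rpower b (s + 1) - 2 * Rpower m (s + 1)) /
     (Rpower a s + Rpower b s - 2 * Rpower m s)).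

(* Main.v *)
Require Import Defs.
From Stdlib Require Import Reals Lra.
From Coquelicot Require Import Coquelicot.
Open Scope R_scope.

Definition F0 := at_right 0.

Lemma lim_plus (f g : R -> R) a b : filterlim f F0 (locally a) -> filterlim g F0 (locally b) ->
  filterlim (fun x => f x + g x) F0 (locally (a+b)).
Proof. intros Hf Hg. eapply filterlim_comp_2; [exact Hf|exact Hg|]. exact (filterlim_plus a b). Qed.

Lemma lim_mult (f g : R -> R) a b : filterlim f F0 (locally a) -> filterlim g F0 (locally b) ->
  filterlim (fun x => f x * g x) F0 (locally (a*b)).
Proof. intros Hf Hg. eapply filterlim_comp_2; [exact Hf|exact Hg|]. exact (@filterlim_mult R_AbsRing a b). Qed.

Lemma lim_const (c : R) : filterlim (fun _ => c) F0 (locally c).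
Proof. apply filterlim_const. Qed.

Lemma lim_cont (h f : R -> R) a : continuous h a -> filterlim f F0 (locally a) ->
  filterlim (fun x => h (f x)) F0 (locally (h a)).
Proof. intros Hh Hf. eapply filterlim_comp; [exact Hf| exact Hh]. Qed.

Lemma lim_inv (f : R -> R) a : a <> 0 -> filterlim f F0 (locally a) ->
  filterlim (fun x => / f x) F0 (locally (/ a)).
Proof. intros Ha Hf. apply (lim_cont (fun x => / x)); auto. apply continuous_Rinv; auto. Qed.

Lemma lim_minus (f g : R -> R) a b : filterlim f F0 (locally a) -> filterlim g F0 (locally b) ->
  filterlim (fun x => f x - g x) F0 (locally (a-b)).
Proof. intros Hf Hg. unfold Rminus. apply lim_plus; auto.
  replace (- b) with (-1 * b) by ring.
  eapply filterlim_ext; [|apply (lim_mult (fun _ => -1) g); auto using lim_const].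
  intros; simpl; ring. Qed.

Lemma lim_div (f g : R -> R) a b : b <> 0 -> filterlim f F0 (locally a) -> filterlim g F0 (locally b) ->
  filterlim (fun x => f x / g x) F0 (locally (a/b)).
Proof. intros. unfold Rdiv. apply lim_mult; auto. apply lim_inv; auto. Qed.

Lemma lim_id : filterlim (fun x => x) F0 (locally 0).
Proof. unfold F0, at_right, within. intros P HP. unfold filtermap.
  apply filter_imp with (2 := HP). auto. Qed.

Lemma ev_pos : F0 (fun x => 0 < x).
Proof. unfold F0, at_right, within. apply filter_forall. auto. Qed.

Lemma ev_lt1 : F0 (fun x => x < 1).
Proof. unfold F0, at_right, within. exists (mkposreal 1 Rlt_0_1). intros y Hy _.
  unfold ball in Hy; simpl in Hy; unfold AbsRing_ball, abs, minus, plus, opp in Hy; simpl in Hy.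
  apply Rabs_lt_between in Hy. lra. Qed.

Lemma lim_xlnx : filterlim (fun x => x * ln x) F0 (locally 0).
Proof.
  apply filterlim_ext_loc with (fun x => ln x * exp (ln x)).
  - apply filter_imp with (2 := ev_pos). intros x Hx. rewrite exp_ln; auto. ring.
  - apply (filterlim_comp _ _ _ ln (fun y => y * exp y) F0 (Rbar_locally m_infty)).
    apply is_lim_ln_0. apply is_lim_mul_exp_m.
Qed.

Lemma lim_rpow0 q : 0 < q -> filterlim (fun x => Rpower x q) F0 (locally 0).
Proof.
  intros Hq. unfold Rpower.
  eapply filterlim_comp with (G := Rbar_locally m_infty); [| apply is_lim_exp_m].
  intros P [M HM]. unfold filtermap.
  assert (H : at_right 0 (fun x => ln x < M / q)).
  { apply (is_lim_ln_0 (fun y => y < M / q)). exists (M/q). auto. }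
  unfold filtermap, F0. apply filter_imp with (2 := H).
  intros x Hx. apply HM.
  apply Rmult_lt_compat_l with (r := q) in Hx; auto. field_simplify in Hx; lra.
Qed.

Lemma cont_rpow p x0 : 0 < x0 -> continuous (fun x => Rpower x p) x0.
Proof. intros H. unfold Rpower. apply continuous_exp_comp.
  apply (@continuous_mult R_UniformSpace R_AbsRing (fun _ => p) ln). apply continuous_const. apply continuous_ln; auto. Qed.

Lemma lim_eq (f : R -> R) a b : filterlim f F0 (locally a) -> a = b -> filterlim f F0 (locally b).
Proof. intros H ->; exact H. Qed.

Lemma lim_div' (f g : R -> R) a b : filterlim f F0 (locally a) -> filterlim g F0 (locally b) -> b <> 0 ->
  filterlim (fun x => f x / g x) F0 (locally (a/b)).
Proof. intros; apply lim_div; auto. Qed.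

Lemma lim_m : filterlim (fun x => (1+x)/2) F0 (locally (/2)).
Proof. eapply lim_eq. apply lim_div'. apply lim_plus. apply lim_const. apply lim_id. apply lim_const. all: lra. Qed.

Lemma lim_lnm : filterlim (fun x => ln ((1+x)/2)) F0 (locally (ln (/2))).
Proof. apply (lim_cont ln). apply continuous_ln; lra. apply lim_m. Qed.

Lemma lim_powm p : filterlim (fun x => Rpower ((1+x)/2) p) F0 (locally (Rpower (/2) p)).
Proof. apply (lim_cont (fun y => Rpower y p)). apply cont_rpow; lra. apply lim_m. Qed.

Ltac L := first [
    apply lim_xlnx
  | apply lim_lnm
  | apply lim_powm
  | apply lim_m
  | apply lim_rpow0; lra
  | apply lim_id
  | apply lim_const
  | apply lim_minus; L
  | apply lim_plus; L
  | apply lim_div'; [L|L|]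
  | apply lim_mult; L ].

Lemma rpow1 x : Rpower 1 x = 1.
Proof. unfold Rpower. rewrite ln_1, Rmult_0_r. apply exp_0. Qed.

Lemma lim_S : filterlim (fun b => gini_S 1 b) F0 (locally 1).
Proof.
  apply filterlim_ext_loc with (fun b => exp (b * ln b / (1 + b))).
  - apply filter_imp with (2 := ev_pos). intros b Hb. unfold gini_S. rewrite rpow1.
    unfold Rpower. f_equal. rewrite Rmult_1_l. f_equal. field. lra.
  - eapply lim_eq; [apply (lim_cont exp)|apply exp_0]. apply continuous_exp.
    eapply lim_eq. L. all: try lra.
Qed.

Lemma ev_01 : F0 (fun x => 0 < x < 1).
Proof. apply filter_imp with (fun x => 0 < x /\ x < 1). auto. apply filter_and. apply ev_pos. apply ev_lt1. Qed.

Lemma exp_ln2 : exp (ln 2) = 2.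
Proof. apply exp_ln; lra. Qed.

Lemma pow_half s : Rpower (/2) s = / exp (s * ln 2).
Proof. unfold Rpower. rewrite ln_Rinv by lra. rewrite <- exp_Ropp. f_equal; ring. Qed.

Lemma pow_half1 s : Rpower (/2) (s+1) = / (exp (s * ln 2) * 2).
Proof. rewrite pow_half. replace ((s+1)*ln 2) with (s*ln 2 + ln 2) by ring. rewrite exp_plus, exp_ln2. reflexivity. Qed.

Lemma case_pos s : 0 < s -> s <> 1 -> exists L, L < 1 /\ filterlim (fun b => lambda_mean s 1 b) F0 (locally L).
Proof.
  intros Hs Hs1.
  set (l := ln 2). assert (Hl : / 2 < l) by apply ln_lt_2.
  set (v := exp (s * l)). assert (Hv : 0 < v) by apply exp_pos.
  assert (Hv2 : v <> 2 /\ (2 * v - (s + 3)) * (v - 2) > 0).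
  { destruct (Rlt_or_le s 1) as [H1|H1].
    - set (z := exp ((1 - s) * l)).
      assert (Hz : 1 + (1 - s) * l <= z) by apply exp_ineq1_le.
      assert (Hvz : v * z = 2). { unfold v, z. rewrite <- exp_plus. rewrite <- exp_ln2. f_equal. unfold l; ring. }
      assert (Hk : (1 - s) * ((s + 3) * l - 1) > 0). { apply Rmult_lt_0_compat; nra. }
      assert (Hz0 : 0 < z) by apply exp_pos.
      assert (Hsz : (s + 3) * z >= (s + 3) * (1 + (1 - s) * l)) by (apply Rle_ge, Rmult_le_compat_l; lra).
      assert (Hq0 : (2 * v - (s + 3)) * z < 0) by nra.
      assert (Hq : 2 * v < s + 3).
      { destruct (Rlt_or_le (2 * v) (s + 3)); auto. assert (0 <= (2 * v - (s + 3)) * z) by (apply Rmult_le_pos; lra). lra. }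
      split; nra.
    - assert (H1' : 1 < s) by (destruct H1; auto; congruence).
      set (z := exp ((s - 1) * l)).
      assert (Hz : 1 + (s - 1) * l <= z) by apply exp_ineq1_le.
      assert (Hvz : v = 2 * z). { unfold v, z. rewrite <- exp_ln2 at 1. rewrite <- exp_plus. f_equal. unfold l; ring. }
      assert (Hk : (s - 1) * l > (s - 1) / 2) by nra.
      split; nra. }
  destruct Hv2 as [Hv2 Hsg].
  exists ((s-1)/(s+1) * ((1 + 0 - 2 * Rpower (/2) (s+1)) / (1 + 0 - 2 * Rpower (/2) s))).
  split.
  - rewrite pow_half1, pow_half. fold l. fold v.
    assert (E : (s - 1) / (s + 1) * ((1 + 0 - 2 * / (v * 2)) / (1 + 0 - 2 * / v)) - 1
              = (s + 3 - 2 * v) / ((s + 1) * (v - 2))).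
    { field. repeat split; try lra. }
    assert (Hd : 0 < (s + 1) * (v - 2) * ((s + 1) * (v - 2))).
    { assert (Hx : (s+1)*(v-2) <> 0) by (apply Rmult_integral_contrapositive_currified; lra).
      apply Rsqr_pos_lt in Hx. exact Hx. }
    assert (E2 : (s + 3 - 2 * v) / ((s + 1) * (v - 2)) = (s + 3 - 2 * v) * ((s + 1) * (v - 2)) / ((s + 1) * (v - 2) * ((s + 1) * (v - 2)))).
    { field. split; lra. }
    assert (Hn : (s + 3 - 2 * v) * ((s + 1) * (v - 2)) < 0) by nra.
    assert (0 < / ((s + 1) * (v - 2) * ((s + 1) * (v - 2)))) by (apply Rinv_0_lt_compat; auto).
    unfold Rdiv in E2. nra.
  - apply filterlim_ext_loc with (fun b => (s-1)/(s+1) * ((1 + Rpower b (s+1) - 2*Rpower ((1+b)/2) (s+1)) / (1 + Rpower b s - 2*Rpower ((1+b)/2) s))).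
    + apply filter_imp with (2 := ev_01). intros b Hb. unfold lambda_mean.
      destruct (Req_EM_T 1 b); [lra|].
      destruct (Req_EM_T s (-1)); [lra|]. destruct (Req_EM_T s 0); [lra|]. destruct (Req_EM_T s 1); [lra|].
      rewrite !rpow1. reflexivity.
    + L. rewrite pow_half. fold l. fold v. intro H.
      assert (v * (1 + 0 - 2 * / v) = v - 2) by (field; lra). rewrite H in *. lra.
Qed.

Lemma lim_pow (f : R -> R) a n : filterlim f F0 (locally a) -> filterlim (fun x => f x ^ n) F0 (locally (a ^ n)).
Proof. intros H. induction n as [|n IH]; simpl. apply lim_const. apply lim_mult; auto. Qed.

Ltac L2 := first [
    apply lim_xlnx
  | apply lim_lnm
  | apply lim_powm
  | apply lim_m
  | apply lim_rpow0; lra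
  | apply lim_id
  | apply lim_const
  | apply lim_pow; L2
  | apply lim_minus; L2
  | apply lim_plus; L2
  | apply lim_div'; [L2|L2|]
  | apply lim_mult; L2 ].

Lemma div_scale X Y r : r <> 0 -> X / Y = (X * r) / (Y * r).
Proof. intros Hr. unfold Rdiv. rewrite Rinv_mult.
  replace (X * r * (/ Y * / r)) with (X * / Y * (r * / r)) by ring. rewrite Rinv_r; auto; ring. Qed.

Lemma case_neg s : s < 0 -> s <> -1 -> exists L, L < 1 /\ filterlim (fun b => lambda_mean s 1 b) F0 (locally L).
Proof.
  intros Hs Hs1. exists 0. split. lra.
  apply filterlim_ext_loc with (fun b => (s-1)/(s+1) * ((Rpower b (-s) + b - 2*Rpower ((1+b)/2) (s+1) * Rpower b (-s)) / (Rpower b (-s) + 1 - 2*Rpower ((1+b)/2) s * Rpower b (-s)))).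
  - apply filter_imp with (2 := ev_01). intros b Hb. unfold lambda_mean.
    destruct (Req_EM_T 1 b); [lra|].
    destruct (Req_EM_T s (-1)); [lra|]. destruct (Req_EM_T s 0); [lra|]. destruct (Req_EM_T s 1); [lra|].
    rewrite !rpow1. f_equal.
    assert (Hr : Rpower b (-s) <> 0) by (apply Rgt_not_eq, exp_pos).
    rewrite (div_scale (1 + Rpower b (s+1) - _) _ _ Hr).
    assert (H1 : Rpower b (s+1) * Rpower b (-s) = b).
    { rewrite <- Rpower_plus. replace (s+1+-s) with 1 by ring. apply Rpower_1; lra. }
    assert (H0 : Rpower b s * Rpower b (-s) = 1).
    { rewrite <- Rpower_plus. replace (s+-s) with 0 by ring. apply Rpower_O; lra. }
    f_equal.
    + transitivity (Rpower b (-s) + Rpower b (s+1) * Rpower b (-s) - 2 * Rpower ((1 + b) / 2) (s + 1) * Rpower b (-s)). rewrite H1; ring. ring.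
    + transitivity (Rpower b (-s) + Rpower b s * Rpower b (-s) - 2 * Rpower ((1 + b) / 2) s * Rpower b (-s)). rewrite H0; ring. ring.
  - eapply lim_eq. L2. all: try lra.
Qed.

Lemma case_m1 : exists L, L < 1 /\ filterlim (fun b => lambda_mean (-1) 1 b) F0 (locally L).
Proof.
  exists 0. split. lra.
  apply filterlim_ext_loc with (fun b => (2 * (b * ln ((1+b)/2)) - b * ln b) / (b / 2 + / 2 - 2 * b / (1 + b))).
  - apply filter_imp with (2 := ev_01). intros b Hb. unfold lambda_mean.
    destruct (Req_EM_T 1 b); [lra|].
    destruct (Req_EM_T (-1) (-1)); [|lra].
    assert (Hr : b <> 0) by lra.
    rewrite (div_scale (2 * ln ((1+b)/2) - ln 1 - ln b) _ _ Hr). rewrite ln_1. f_equal. ring. field. lra.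
  - eapply lim_eq. L2. all: try lra.
Qed.

Lemma lim_inv_infty (g : R -> R) : filterlim g F0 (Rbar_locally p_infty) -> filterlim (fun x => / g x) F0 (locally 0).
Proof. intros H. eapply filterlim_comp. exact H. apply (filterlim_Rbar_inv p_infty). discriminate. Qed.

Lemma case_0 : exists L, L < 1 /\ filterlim (fun b => lambda_mean 0 1 b) F0 (locally L).
Proof.
  exists 0. split. lra.
  apply filterlim_ext_loc with (fun b => (1 * ln 1 + b * ln b - (1 + b) * ln ((1+b)/2)) * / (2 * ln ((1+b)/2) - ln 1 - ln b)).
  - apply filter_imp with (2 := ev_01). intros b Hb. unfold lambda_mean.
    destruct (Req_EM_T 1 b); [lra|].
    destruct (Req_EM_T 0 (-1)); [lra|]. destruct (Req_EM_T 0 0); [|lra]. reflexivity.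
  - eapply lim_eq. apply lim_mult. L2. apply lim_inv_infty.
    + intros P [M HM]. unfold filtermap.
      assert (H : at_right 0 (fun x => ln x < - M - 2 * ln 2)).
      { apply (is_lim_ln_0 (fun y => y < - M - 2 * ln 2)). exists (- M - 2 * ln 2). auto. }
      generalize (filter_and _ _ H ev_01). apply filter_imp. intros x [Hx Hx1].
      apply HM. rewrite ln_1.
      assert (ln (/2) < ln ((1+x)/2)) by (apply ln_increasing; lra).
      rewrite ln_Rinv in H0 by lra. lra.
    + simpl. ring.
Qed.

Lemma case_1 : exists L, L < 1 /\ filterlim (fun b => lambda_mean 1 1 b) F0 (locally L).
Proof.
  assert (Hl : / 2 < ln 2) by apply ln_lt_2.
  exists ((0 - 1) ^ 2 / (4 * (1 * ln 1 + 0 - (1 + 0) * ln (/2)))). split.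
  - rewrite ln_1, ln_Rinv by lra.
    replace ((0 - 1) ^ 2 / (4 * (1 * 0 + 0 - (1 + 0) * - ln 2))) with (/ (4 * ln 2)) by (field; lra).
    assert (1 < 4 * ln 2) by lra.
    rewrite <- Rinv_1. apply Rinv_lt_contravar; lra.
  - apply filterlim_ext_loc with (fun b => (b - 1) ^ 2 / (4 * (1 * ln 1 + b * ln b - (1 + b) * ln ((1+b)/2)))).
    + apply filter_imp with (2 := ev_01). intros b Hb. unfold lambda_mean.
      destruct (Req_EM_T 1 b); [lra|].
      destruct (Req_EM_T 1 (-1)); [lra|]. destruct (Req_EM_T 1 0); [lra|]. destruct (Req_EM_T 1 1); [|lra].
      reflexivity.
    + L2. rewrite ln_1, ln_Rinv by lra. lra.
Qed.

Lemma cases s : exists L, L < 1 /\ filterlim (fun b => lambda_mean s 1 b) F0 (locally L).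
Proof.
  destruct (Rtotal_order s 0) as [H|[H|H]].
  - destruct (Req_dec s (-1)) as [->|H1]. apply case_m1. apply case_neg; auto.
  - subst. apply case_0.
  - destruct (Req_dec s 1) as [->|H1]. apply case_1. apply case_pos; auto.
Qed.

Theorem theorem3 :
  ~ (exists s : R, forall a b : R, 0 < a -> 0 < b ->
       gini_S a b <= lambda_mean s a b).
Proof.
  intros [s Hs]. destruct (cases s) as [L [HL Hlim]].
  assert (Hd := lim_minus _ _ _ _ lim_S Hlim).
  assert (Hp : locally (1 - L) (fun y => 0 < y)).
  { assert (He : 0 < (1 - L) / 2) by lra. exists (mkposreal _ He). intros y Hy.
    unfold ball in Hy; simpl in Hy; unfold AbsRing_ball, abs, minus, plus, opp in Hy; simpl in Hy.
    apply Rabs_lt_between in Hy. lra. }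
  specialize (Hd _ Hp). unfold filtermap in Hd.
  destruct (@filter_ex _ _ (at_right_proper_filter 0) _ (filter_and _ _ Hd ev_01)) as [b [Hb1 Hb2]].
  specialize (Hs 1 b Rlt_0_1 (proj1 Hb2)). lra.
Qed.
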